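(* Let $\mathcal{F}$ be a 3CNF formula sampled from $\mathcal{P}^{\mathrm{plant}}_{n,p}$ with planted assignment $\varphi$, where $p\geq d/n^2$ and $d$ is a sufficiently large constant. Let $F_{SUPP}$ be the number of variables whose support with respect to $\varphi$ (the number of clauses of $\mathcal{F}$ they support w.r.t. $\varphi$) is less than $d/3$. Then with probability tending to $1$ as $n\to\infty$, $F_{SUPP}\leq e^{-\Theta(d)}n$.
   Context: 3CNF: each clause has exactly three literals over three distinct variables. $\mathcal{P}^{\mathrm{plant}}_{n,p}$: pick $\varphi$ uniformly at random in $\{\mathrm{TRUE},\mathrm{FALSE}\}^n$, then include each of the $7\binom n3$ 3-clauses satisfied by $\varphi$ independently with probability $p$. A variable $x$ supports a clause $C$ with respect to a partial assignment $\psi$ if $x$ is the only variable satisfying $C$ under $\psi$ and the other two variables of $C$ are assigned by $\psi$. *)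

(* Defs.v *)
From HB Require Import structures.
From mathcomp Require Import all_boot all_order all_algebra.
From mathcomp Require Import all_classical all_reals all_analysis.
Set Implicit Arguments. Unset Strict Implicit. Unset Printing Implicit Defensive.
Import Order.TTheory GRing.Theory Num.Theory.
Local Open Scope ring_scope.

(* Variables are 'I_n; a literal is a pair (x, b): the literal is x if b = true
   and ~x if b = false.  An assignment is phi : {ffun 'I_n -> bool}. *)
Definition lit (n : nat) := ('I_n * bool)%type.

Definition lit_true n (phi : {ffun 'I_n -> bool}) (l : lit n) : bool :=
  phi l.1 == l.2.

Definition is_3clause n (C : {set lit n}) : bool :=
  (#|C| == 3)%N &&
  [forall l in C, forall l' in C, (l.1 == l'.1) ==> (l == l')].

Definition clause_sat n (phi : {ffun 'I_n -> bool}) (C : {set lit n}) : bool :=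
  [exists l in C, lit_true phi l].

Definition planted_clauses n (phi : {ffun 'I_n -> bool}) : {set {set lit n}} :=
  [set C | is_3clause C && clause_sat phi C].

Definition formula n := {set {set lit n}}.

(* Probability of an event E (depending on the planted assignment and the
   formula) under P^plant_{n,p}: phi uniform on {TRUE,FALSE}^n, then each
   clause satisfied by phi included independently with probability p. *)
Definition Pplant {R : realType} (n : nat) (p : R)
    (E : {ffun 'I_n -> bool} -> formula n -> bool) : R :=
  \sum_(phi : {ffun 'I_n -> bool})
     (2 ^+ n)^-1 *
     \sum_(F : formula n | F \subset planted_clauses phi)
        p ^+ #|F| * (1 - p) ^+ (#|planted_clauses phi| - #|F|)%N
        * (E phi F)%:R.

(* x supports C w.r.t. the (total) assignment phi: x is the only variable of C
   whose literal in C is satisfied by phi (the other two variables of C are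
   assigned, since phi is total). *)
Definition supports n (phi : {ffun 'I_n -> bool}) (x : 'I_n) (C : {set lit n})
  : bool :=
  [exists l in C, (l.1 == x) && lit_true phi l] &&
  [forall l in C, lit_true phi l ==> (l.1 == x)].

Definition support n (F : formula n) (phi : {ffun 'I_n -> bool}) (x : 'I_n)
  : nat := #|[set C in F | supports phi x C]|.

Definition F_SUPP (R : realType) n (d : R) (F : formula n)
    (phi : {ffun 'I_n -> bool}) : nat :=
  #|[set x : 'I_n | (support F phi x)%:R < d / 3]|.
Arguments Pplant {R} n p E.

(* Main.v *)
Require Import Defs.
From HB Require Import structures.
From mathcomp Require Import all_boot all_order all_algebra.
From mathcomp Require Import all_classical all_reals all_analysis.
Import Order.TTheory GRing.Theory Num.Theory.
From mathcomp Require Import ring lra zify.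
Import numFieldNormedType.Exports.
Local Open Scope classical_set_scope.
Local Open Scope ring_scope.
Set Implicit Arguments. Unset Strict Implicit. Unset Printing Implicit Defensive.
Section S.
Variable R : realType.

Lemma sum_setT_prod (T : finType) (a b : T -> R) :
  \sum_(X : {set T}) (\prod_(i in X) a i) * (\prod_(i in ~: X) b i)
  = \prod_i (a i + b i).
Proof.
have E : \prod_i (a i + b i) =
   \prod_i \sum_(c : bool) (if c then a i else b i).
  by apply: eq_bigr => i _; rewrite big_bool.
rewrite E bigA_distr_bigA /=.
rewrite (reindex (fun X : {set T} => [ffun i => i \in X])) /=; last first.
  exists (fun f : {ffun T -> bool} => finset (fun i => f i)) => [X _|f _].
    by apply/setP => i; rewrite inE ffunE.
  by apply/ffunP => i; rewrite ffunE inE.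
apply: eq_bigr => X _.
rewrite [RHS](bigID (mem X)) /=; congr (_ * _).
  by apply: eq_bigr => i Hi; rewrite ffunE Hi.
rewrite (eq_bigl (fun i => i \notin X)); last by move=> i; rewrite inE.
by apply: eq_bigr => i /negbTE Hi; rewrite ffunE Hi.
Qed.

Lemma sum_subset_prod (T : finType) (A : {set T}) (a b : T -> R) :
  \sum_(X : {set T} | X \subset A) (\prod_(i in X) a i) * (\prod_(i in A :\: X) b i)
  = \prod_(i in A) (a i + b i).
Proof.
pose a' i := if i \in A then a i else 0.
pose b' i := if i \in A then b i else 1.
have H := @sum_setT_prod T a' b'.
have -> : \prod_(i in A) (a i + b i) = \prod_i (a' i + b' i).
  rewrite [RHS](bigID (mem A)) /= [X in _ = _ * X]big1 ?mulr1.
    by apply: eq_bigr => i Hi; rewrite /a' /b' Hi.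
  by move=> i /negbTE Hi; rewrite /a' /b' Hi add0r.
rewrite -H [RHS](bigID (fun X : {set T} => X \subset A)) /=.
rewrite [X in _ = _ + X]big1 ?addr0; last first.
  move=> X /subsetPn [i iX iA].
  by rewrite (bigD1 i) //= /a' (negbTE iA) mul0r mul0r.
apply: eq_bigr => X XA; congr (_ * _).
  by apply: eq_bigr => i iX; rewrite /a' (fintype.subsetP XA i iX).
rewrite [RHS](bigID (mem A)) /= [X in _ = _ * X]big1 ?mulr1.
  rewrite [RHS](eq_bigl (mem (A :\: X))); last by move=> i; rewrite !inE andbC.
  by apply: eq_bigr => i; rewrite !inE /b' => /andP [_ ->].
by move=> i /andP [_ /negbTE Hi]; rewrite /b' Hi.
Qed.

Lemma expect_prod (T : finType) (P : {set T}) (p : R) (g : T -> R) :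
  \sum_(F : {set T} | F \subset P)
     p ^+ #|F| * (1 - p) ^+ (#|P| - #|F|)%N * \prod_(i in F) g i
  = \prod_(i in P) (p * g i + (1 - p)).
Proof.
rewrite -sum_subset_prod; apply: eq_bigr => F FP.
rewrite big_split /= prodr_const prodr_const cardsDS //.
by rewrite -!mulrA; congr (_ * _); rewrite mulrC.
Qed.

End S.
Section C.
Local Close Scope classical_set_scope.
Variable n : nat.
Variable phi : {ffun 'I_n -> bool}.

Lemma supports_uniq (x y : 'I_n) (C : {set lit n}) :
  supports phi x C -> supports phi y C -> x = y.
Proof.
move=> /andP [/existsP [l /andP [lC /andP [/eqP <- lt]]] _].
move=> /andP [_ /forallP /(_ l)]; rewrite lC lt /= => /eqP //.
Qed.

Definition cl (x : 'I_n) (A : {set 'I_n}) : {set lit n} :=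
  (x, phi x) |: [set (y, ~~ phi y) | y in A].

Lemma inj_neg : injective (fun y : 'I_n => (y, ~~ phi y)).
Proof. by move=> y z [->]. Qed.

Lemma cl_mem (x : 'I_n) (A : {set 'I_n}) (l : lit n) :
  l \in cl x A -> ((l.1 == x) && (l.2 == phi x)) || ((l.1 \in A) && (l.2 == ~~ phi l.1)).
Proof.
rewrite !inE => /orP [/eqP -> | /imsetP [y yA ->]] /=; first by rewrite !eqxx.
by rewrite yA !eqxx orbT.
Qed.

Lemma cl_neg (x y : 'I_n) (A : {set 'I_n}) : x \notin A ->
  ((y, ~~ phi y) \in cl x A) = (y \in A).
Proof.
move=> xA; rewrite !inE (mem_imset _ _ inj_neg).
case: eqP => [[yx e] | _] //=.
by move: e; rewrite yx; case: (phi x).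
Qed.

End C.
Section C2.
Local Close Scope classical_set_scope.
Variable n : nat.
Variable phi : {ffun 'I_n -> bool}.

Definition Sx (x : 'I_n) : {set {set lit n}} :=
  [set C in planted_clauses phi | supports phi x C].

Lemma cl_in_S (x : 'I_n) (A : {set 'I_n}) :
  x \notin A -> #|A| = 2%N -> cl phi x A \in Sx x.
Proof.
move=> xA cA.
have key : forall l, l \in cl phi x A -> l.2 = if l.1 == x then phi l.1 else ~~ phi l.1.
  move=> l /cl_mem /orP [/andP [/eqP e1 /eqP e2] | /andP [l1A /eqP e2]].
    by rewrite e1 eqxx e2.
  by have -> : (l.1 == x) = false by apply/eqP => e; rewrite -e l1A in xA.
rewrite !inE; apply/andP; split; first (apply/andP; split).
- apply/andP; split.
    rewrite /cl cardsU1 (card_imset _ (@inj_neg n phi)) cA.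
    have -> : (x, phi x) \notin [set (y, ~~ phi y) | y in A].
      apply/imsetP => [[y yA [e1 e2]]]; move: e2; rewrite -e1.
      by case: (phi x).
    by [].
  apply/forallP => l; apply/implyP => lC; apply/forallP => l'; apply/implyP => l'C.
  apply/implyP => /eqP e.
  case: l l' lC l'C e => [v b] [v' b'] lC l'C /= e; subst v'.
  by have /= := key _ lC; have /= := key _ l'C; move=> -> ->.
- by apply/existsP; exists (x, phi x); rewrite !inE eqxx /= /lit_true /= eqxx.
- apply/andP; split.
    by apply/existsP; exists (x, phi x); rewrite !inE eqxx /= /lit_true /= !eqxx.
  apply/forallP => l; apply/implyP => lC; apply/implyP; rewrite /lit_true.
  rewrite (key _ lC); case: (l.1 == x) => //.
  by case: (phi l.1).
Qed.

Lemma card_Sx (x : 'I_n) : ('C(n.-1, 2) <= #|Sx x|)%N.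
Proof.
pose D := [set A : {set 'I_n} | A \subset ~: [set x] & #|A| == 2%N].
have cD : #|D| = 'C(n.-1, 2).
  by rewrite cards_draws cardsC1 card_ord.
have xD : forall A, A \in D -> x \notin A.
  move=> A; rewrite inE => /andP [/fintype.subsetP sA _]; apply/negP => /sA.
  by rewrite !inE eqxx.
rewrite -cD -(card_in_imset (f := cl phi x)); last first.
  move=> A B AD BD e; apply/setP => y.
  by rewrite -(cl_neg phi y (xD _ AD)) -(cl_neg phi y (xD _ BD)) e.
apply: subset_leq_card; apply/fintype.subsetP => C /imsetP [A AD ->].
apply: cl_in_S; first exact: xD.
by move: AD; rewrite inE => /andP [_ /eqP].
Qed.

End C2.
Section D.
Local Close Scope classical_set_scope.
Variable R : realType.
Variable n : nat.
Variable phi : {ffun 'I_n -> bool}.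
Variable p : R.
Hypothesis p0 : 0 <= p.
Hypothesis p1 : p <= 1.

Let P := planted_clauses phi.
Let w (F : formula n) : R := p ^+ #|F| * (1 - p) ^+ (#|P| - #|F|)%N.

Lemma w_ge0 F : 0 <= w F.
Proof. by rewrite /w mulr_ge0 // exprn_ge0 // subr_ge0. Qed.

Lemma w_sum1 : \sum_(F : formula n | F \subset P) w F = 1.
Proof.
have := @expect_prod R _ P p (fun _ => 1).
rewrite [X in _ = X -> _]big1; last by move=> C _; rewrite mulr1 addrC subrK.
move=> <-; apply: eq_bigr => F _.
by rewrite /w big1 ?mulr1.
Qed.

Lemma support_sum (F : formula n) x :
  Defs.support F phi x = (\sum_(C in F) nat_of_bool (supports phi x C))%N.
Proof.
rewrite /Defs.support -sum1_card big_mkcond /= [RHS]big_mkcond /=.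
apply: eq_bigr => C _; rewrite inE.
by case: (C \in F); case: (supports phi x C).
Qed.

Lemma N_le1 (X : {set 'I_n}) (C : {set lit n}) :
  let N := (\sum_(x in X) nat_of_bool (supports phi x C))%N in
  N = 0%N \/ N = 1%N.
Proof.
move=> N; rewrite /N.
case: (pickP (fun x => (x \in X) && supports phi x C)) => [x0 /andP [x0X sx0] | none].
  right; rewrite (bigD1 x0) //= sx0 big1 // => x /andP [_ xx0].
  case sx: (supports phi x C) => //.
  by rewrite (supports_uniq sx sx0) eqxx in xx0.
left; rewrite big1 // => x xX; have := none x; rewrite xX /=.
by case: (supports phi x C).
Qed.

Variable r : R.
Hypothesis r0 : 0 <= r.
Hypothesis r1 : r <= 1.
Let q := p * r + (1 - p).

Lemma q_ge0 : 0 <= q.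
Proof. by rewrite /q addr_ge0 ?mulr_ge0 // subr_ge0. Qed.

Lemma q_le1 : q <= 1.
Proof.
rewrite /q -lerBrDr opprB addrC subrK.
by rewrite -[X in _ <= X]mulr1 ler_wpM2l.
Qed.

Lemma prodX (X : {set 'I_n}) :
  \sum_(F : formula n | F \subset P) w F * \prod_(x in X) r ^+ Defs.support F phi x
  = q ^+ (\sum_(x in X) #|Sx phi x|)%N.
Proof.
pose N C := (\sum_(x in X) nat_of_bool (supports phi x C))%N.
transitivity (\sum_(F : formula n | F \subset P) w F * \prod_(C in F) r ^+ N C).
  apply: eq_bigr => F _; congr (_ * _).
  under eq_bigr do rewrite support_sum expr_sum.
  rewrite exchange_big /=; apply: eq_bigr => C _.
  by rewrite prodrXr.
rewrite /w expect_prod.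
transitivity (\prod_(C in P) q ^+ N C).
  apply: eq_bigr => C _; rewrite /q /N.
  by case: (N_le1 X C) => ->; rewrite ?expr0 ?expr1 // mulr1 addrC subrK.
rewrite prodrXr; congr (_ ^+ _).
rewrite exchange_big /=; apply: eq_bigr => x _.
rewrite -sum1_card big_mkcond /= [RHS]big_mkcond /=.
apply: eq_bigr => C _; rewrite /Sx /P !inE.
by case: (is_3clause C && clause_sat phi C); case: (supports phi x C).
Qed.


Variables (k Z : R) (m : nat).
Hypothesis Z0 : 0 <= Z.
Hypothesis hZ : forall s : nat, s%:R < k -> 1 <= Z * r ^+ s.
Hypothesis hm : forall x, (m <= #|Sx phi x|)%N.

Definition Bset (F : formula n) : {set 'I_n} :=
  [set x | (Defs.support F phi x)%:R < k].

Lemma expB :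
  \sum_(F : formula n | F \subset P) w F * expR (#|Bset F|%:R)
  <= ((expR 1 - 1) * Z * q ^+ m + 1) ^+ n.
Proof.
set u := expR 1 - 1.
have u0 : 0 <= u by rewrite /u subr_ge0; apply: le_trans (expR_ge1Dx 1); rewrite lerDl.
have e1 : forall F, expR (#|Bset F|%:R) =
    \sum_(X : {set 'I_n}) (if X \subset Bset F then u ^+ #|X| else 0).
  move=> F; rewrite -big_mkcond /=.
  rewrite -(mulr1 (#|Bset F|%:R)) expRM_natl.
  transitivity (\prod_(x in Bset F) (u + 1)); first by rewrite prodr_const /u subrK.
  rewrite -sum_subset_prod; apply: eq_bigr => X _.
  by rewrite prodr_const big1 ?mulr1.
under eq_bigr do rewrite e1.
apply: (le_trans (y := \sum_(F : formula n | F \subset P) w F *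
   \sum_(X : {set 'I_n}) u ^+ #|X| * \prod_(x in X) (Z * r ^+ Defs.support F phi x))).
  apply: ler_sum => F _; apply: ler_wpM2l; first exact: w_ge0.
  apply: ler_sum => X _; case: ifP => XB.
    rewrite -[X in X <= _]mulr1 ler_wpM2l ?exprn_ge0 //.
    have : \prod_(x in X) (1:R) <= \prod_(x in X) (Z * r ^+ Defs.support F phi x).
      apply: ler_prod => x xX; rewrite ler01 /=; apply: hZ.
      by move: (fintype.subsetP XB x xX); rewrite inE.
    by rewrite big1_eq.
  by rewrite mulr_ge0 ?exprn_ge0 // prodr_ge0 // => x _; rewrite mulr_ge0 ?exprn_ge0.
under eq_bigr do rewrite big_distrr /=.
rewrite exchange_big /=.
apply: (le_trans (y := \sum_(X : {set 'I_n}) ((u * Z * q ^+ m) ^+ #|X|))).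
  apply: ler_sum => X _.
  have -> : \sum_(F : formula n | F \subset P)
     w F * (u ^+ #|X| * \prod_(x in X) (Z * r ^+ Defs.support F phi x))
     = u ^+ #|X| * Z ^+ #|X| *
       \sum_(F : formula n | F \subset P) w F * \prod_(x in X) r ^+ Defs.support F phi x.
    rewrite big_distrr /=; apply: eq_bigr => F _.
    rewrite big_split /= prodr_const.
    by ring.
  rewrite prodX !exprMn -!mulrA; apply: ler_wpM2l; first exact: exprn_ge0.
  apply: ler_wpM2l; first exact: exprn_ge0.
  rewrite -exprM; apply: ler_wiXn2l; [exact: q_ge0 | exact: q_le1 |].
  rewrite mulnC -sum_nat_const; exact: leq_sum.
have := @sum_setT_prod R 'I_n (fun _ => u * Z * q ^+ m) (fun _ => 1).
rewrite prodr_const card_ord => <-.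
rewrite le_eqVlt; apply/orP; left; apply/eqP.
  by apply: eq_bigr => X _; rewrite prodr_const big1 ?mulr1.
Qed.

End D.
Section E.
Local Close Scope classical_set_scope.
Variable R : realType.

Lemma avg_phi n (f : {ffun 'I_n -> bool} -> R) (b : R) :
  (forall phi, f phi <= b) ->
  \sum_(phi : {ffun 'I_n -> bool}) (2 ^+ n)^-1 * f phi <= b.
Proof.
move=> hf.
apply: (le_trans (y := \sum_(phi : {ffun 'I_n -> bool}) (2 ^+ n)^-1 * b)).
  by apply: ler_sum => phi _; apply: ler_wpM2l; [rewrite invr_ge0 exprn_ge0 | exact: hf].
rewrite sumr_const card_ffun card_bool card_ord -[_ *+ (2 ^ n)%N]mulr_natr natrX.
by rewrite mulrC mulrA mulfV ?mul1r // expf_neq0.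
Qed.

Lemma avg_phi1 n :
  \sum_(phi : {ffun 'I_n -> bool}) (2 ^+ n)^-1 = 1 :> R.
Proof.
rewrite sumr_const card_ffun card_bool card_ord -[_ *+ (2 ^ n)%N]mulr_natr natrX.
by rewrite mulVf // expf_neq0.
Qed.

Lemma Pplant_bound n (p : R) (p0 : 0 <= p) (p1 : p <= 1) (d t r Z : R) (m : nat)
  (r0 : 0 <= r) (r1 : r <= 1) (Z0 : 0 <= Z)
  (hZ : forall s : nat, s%:R < d / 3 -> 1 <= Z * r ^+ s)
  (hm : (m <= 'C(n.-1, 2))%N) :
  let P := Pplant n p (fun phi F => (F_SUPP d F phi)%:R <= t * n%:R) in
  0 <= 1 - P /\
  1 - P <= expR (- (t * n%:R)) * ((expR 1 - 1) * Z * (p * r + (1 - p)) ^+ m + 1) ^+ n.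
Proof.
move=> P.
have E1 : 1 - P = \sum_(phi : {ffun 'I_n -> bool}) (2 ^+ n)^-1 *
   \sum_(F : formula n | F \subset planted_clauses phi)
     p ^+ #|F| * (1 - p) ^+ (#|planted_clauses phi| - #|F|)%N
     * (1 - (((F_SUPP d F phi)%:R <= t * n%:R)%R : bool)%:R).
  rewrite /P /Pplant -[X in X - _](avg_phi1 n) -sumrB; apply: eq_bigr => phi _.
  rewrite -[X in X - _]mulr1 -mulrBr; congr (_ * _).
  rewrite -[X in X - _](w_sum1 phi p) -sumrB.
  by apply: eq_bigr => F _; rewrite mulrBr mulr1.
rewrite E1; split.
  apply: sumr_ge0 => phi _; rewrite mulr_ge0 ?invr_ge0 ?exprn_ge0 //.
  apply: sumr_ge0 => F _; rewrite mulr_ge0 //; first exact: w_ge0.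
  by case: ((F_SUPP d F phi)%:R <= t * n%:R)%R; rewrite /= ?subrr ?subr0.
apply: avg_phi => phi.
have hm' : forall x, (m <= #|Sx phi x|)%N.
  by move=> x; apply: leq_trans hm (card_Sx phi x).
apply: (le_trans (y := expR (- (t * n%:R)) *
   \sum_(F : formula n | F \subset planted_clauses phi)
     p ^+ #|F| * (1 - p) ^+ (#|planted_clauses phi| - #|F|)%N
     * expR (#|Bset phi (d / 3) F|%:R))).
  rewrite big_distrr /=; apply: ler_sum => F _.
  rewrite mulrCA; apply: ler_wpM2l; first exact: (w_ge0 phi p0 p1 F).
  case E: ((F_SUPP d F phi)%:R <= t * n%:R)%R; rewrite /= ?subrr ?subr0.
    by rewrite mulr_ge0 ?expR_ge0.
  move: E => /negbT; rewrite -ltNge => E.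
  rewrite -expRD; apply: le_trans (expR_ge1Dx _).
  rewrite lerDl addrC subr_ge0; apply: ltW.
  exact: E.
apply: ler_wpM2l; first exact: expR_ge0.
exact: (expB p0 p1 r0 r1 Z0 hZ hm').
Qed.
End E.
Lemma binC2 k : ('C(k, 2) * 2 = k * k.-1)%N.
Proof. by have := bin_ffact k 2; rewrite /= ffactnS ffactn1. Qed.

Lemma m_big n : (75 <= n)%N -> (24 * (n * n) <= 25 * ('C(n.-1, 2) * 2))%N.
Proof.
rewrite binC2; case: n => [|[|j]] // hj /=.
nia.
Qed.
Section G.
Variable R : realType.

Lemma y_bound (d p : R) (n : nat) (d0 : 0 <= d) (p0 : 0 <= p) (p1 : p <= 1)
  (hp : d / (n%:R ^+ 2) <= p) (hn : (75 <= n)%N) :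
  (expR 1 - 1) * expR (d / 15) * (p * expR (-(1/5)) + (1 - p)) ^+ 'C(n.-1, 2)
  <= expR (1 - d / 75).
Proof.
set r := expR (-(1/5)).
set m := 'C(n.-1, 2).
have r0 : 0 <= r by exact: expR_ge0.
have r56 : r <= 5/6.
  have h1 : r * expR (1/5) = 1 by rewrite /r -expRD addNr expR0.
  have h2 : 6/5 <= expR (1/5 : R) by apply: le_trans (expR_ge1Dx _); lra.
  have h3 : r * (6/5) <= r * expR (1/5) by apply: ler_wpM2l.
  lra.
have r1 : r <= 1 by lra.
have nR : 0 < n%:R :> R by rewrite ltr0n; apply: leq_trans hn.
have mR : 12 / 25 * (n%:R ^+ 2) <= m%:R :> R.
  have := m_big hn; rewrite -(ler_nat R) !natrM => h.
  have h2 : (2%:R : R) = 2 by [].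
  rewrite h2 in h; rewrite expr2; lra.
have pm : 12 / 25 * d <= p * m%:R.
  have : d / (n%:R ^+ 2) * (12 / 25 * (n%:R ^+ 2)) <= p * m%:R.
    apply: ler_pM => //.
    by rewrite divr_ge0 // exprn_ge0 // ltW.
  have nz : n%:R != 0 :> R by rewrite gt_eqF.
  have -> : d / n%:R ^+ 2 * (12 / 25 * n%:R ^+ 2) = 12 / 25 * d by field.
  by [].
set q := p * r + (1 - p).
have q0 : 0 <= q by rewrite /q addr_ge0 ?mulr_ge0 // subr_ge0.
have qe : q <= expR (- (p * (1 - r))).
  apply: le_trans (expR_ge1Dx _); rewrite /q; lra.
have qm : q ^+ m <= expR (- (2 / 25 * d)).
  apply: (le_trans (y := expR (- (p * (1 - r))) ^+ m)).
    by apply: lerXn2r => //; rewrite nnegrE expR_ge0.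
  rewrite -expRM_natl ler_expR.
  have : 1 / 6 * (p * m%:R) <= (1 - r) * (p * m%:R).
    by apply: ler_wpM2r; [rewrite mulr_ge0 // ler0n | lra].
  lra.
have e1a : 0 <= expR 1 - 1 :> R.
  by rewrite subr_ge0; apply: le_trans (expR_ge1Dx 1); rewrite lerDl.
have e1b : expR 1 - 1 <= expR 1 :> R by rewrite lerBlDr lerDl.
apply: (le_trans (y := expR 1 * expR (d / 15) * expR (- (2 / 25 * d)))).
  apply: ler_pM; last exact: qm.
  - by rewrite mulr_ge0 ?expR_ge0.
  - exact: exprn_ge0.
  - by apply: ler_wpM2r; [exact: expR_ge0 | ].
rewrite -!expRD ler_expR; lra.
Qed.

End G.
Unset Implicit Arguments.
Theorem proposition2 (R : realType) :
  exists c : R, 0 < c /\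
  exists d0 : R, forall d : R, d0 <= d ->
  forall p : nat -> R,
    (forall n, 0 <= p n <= 1) ->
    (exists N : nat, forall n : nat, (N <= n)%N -> d / (n%:R ^+ 2) <= p n) ->
    (fun n : nat => Pplant n (p n)
        (fun phi F => (F_SUPP d F phi)%:R <= expR (- (c * d)) * n%:R))
      @ \oo --> (1 : R).
Proof.
exists (1/150); split; first by rewrite divr_gt0.
exists 300 => d hd p hp [N HN].
set t := expR (- (1/150 * d)).
set Y := expR (1 - d / 75).
have hdY : Y < t by rewrite ltr_expR; lra.
set del := t - Y.
have del0 : 0 < del by rewrite /del subr_gt0.
apply/cvgrPdist_le => eps eps0.
have de0 : 0 < del * eps by rewrite mulr_gt0.
pose Nb := Num.Def.archi_bound (1 / (del * eps)).
have hNb : 1 / (del * eps) < Nb%:R.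
  by apply: archi_boundP; rewrite divr_ge0 // ltW.
exists (maxn (maxn N 75) Nb) => // n /=.
rewrite !geq_max => /andP [/andP [hN h75] hb].
have p0 : 0 <= p n by case/andP: (hp n).
have p1 : p n <= 1 by case/andP: (hp n).
have r0 : 0 <= expR (-(1/5)) :> R by exact: expR_ge0.
have r1 : expR (-(1/5)) <= 1 :> R by rewrite expR_le1; lra.
have Z0 : 0 <= expR (d / 15) :> R by exact: expR_ge0.
have hZ : forall s : nat, s%:R < d / 3 -> 1 <= expR (d / 15) * expR (-(1/5)) ^+ s.
  move=> s hs; rewrite -expRM_natl -expRD.
  apply: le_trans (expR_ge1Dx _); lra.
have [H0 H1] := @Pplant_bound R n (p n) p0 p1 d t _ _ _ r0 r1 Z0 hZ (leqnn _).
rewrite ger0_norm //; apply: le_trans H1 _.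
have d0 : 0 <= d by lra.
have hy := y_bound d0 p0 p1 (HN n hN) h75.
set y := (expR 1 - 1) * expR (d / 15) * _ ^+ _ in hy *.
have y0 : 0 <= y.
  have e1a : 0 <= expR 1 - 1 :> R.
    by rewrite subr_ge0; apply: le_trans (expR_ge1Dx 1); rewrite lerDl.
  have q0 : 0 <= p n * expR (-(1/5)) + (1 - p n).
    by rewrite addr_ge0 ?mulr_ge0 // subr_ge0.
  by rewrite /y mulr_ge0 ?exprn_ge0 ?mulr_ge0 ?expR_ge0.
apply: (le_trans (y := expR (- (del * n%:R)))).
  apply: (le_trans (y := expR (- (t * n%:R)) * expR (n%:R * Y))).
    apply: ler_wpM2l; first exact: expR_ge0.
    apply: (le_trans (y := expR y ^+ n)).
      apply: lerXn2r.
      - by rewrite nnegrE addr_ge0.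
      - by rewrite nnegrE expR_ge0.
      - by rewrite addrC expR_ge1Dx.
    by rewrite -expRM_natl ler_expR; apply: ler_wpM2l => //.
  rewrite -expRD ler_expR /del; lra.
have hn : 1 < n%:R * (del * eps).
  by rewrite -ltr_pdivrMr //; apply: lt_le_trans hNb _; rewrite ler_nat.
rewrite expRN.
rewrite -[_^-1]div1r ler_pdivrMr ?expR_gt0 //.
have h2 := expR_ge1Dx (del * n%:R).
have h3 : eps * (1 + del * n%:R) <= eps * expR (del * n%:R).
  by apply: ler_wpM2l => //; exact: ltW.
have h4 : 0 <= n%:R :> R by rewrite ler0n.
nra.
Qed.
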